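(* Let $N\ge1$, $h,\varepsilon\in(0,1)$, and let $\Phi$ be the opinion operator defined in the context. Let $P=(p_1,\dots,p_N)\in[-1,1]^N$ with $p_1\le\dots\le p_N$ be a fixed point of $\Phi$ that is not basic, i.e. not of the form $(-1,\dots,-1,1,\dots,1)$ (all entries in $\{-1,1\}$, allowing either block to be empty). Then either (i) every $p_k\in\{-1,0,1\}$, i.e. $P=(-1,\dots,-1,0,\dots,0,1,\dots,1)$; or (ii) there are indices $1\le a\le l<b\le m\le N$ such that $p_k=-1$ for $k<a$; $-\varepsilon<p_k<0$ for $a\le k\le l$; $p_k=0$ for $l<k<b$; $0<p_k<\varepsilon$ for $b\le k\le m$; $p_k=1$ for $k>m$; moreover $J(p_k)=\{a,a+1,\dots,m\}$ for every $k\in\{a,\dots,m\}$, and $p_a+p_{a+1}+\dots+p_m=0$.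
   Context: For $V=(v_1,\dots,v_N)\in[-1,1]^N$ and each $k$, let $J(v_k)=\{l\in\{1,\dots,N\}:|v_l-v_k|\le\varepsilon\}$ (computed within the array $V$) and $I(v_k)=|J(v_k)|$. Put $w_k(V)=v_k+\frac{h}{I(v_k)}\sum_{l\in J(v_k)}v_l$. Then $\Phi(V)=(v_1',\dots,v_N')$ where $v_k'=-1$ if $w_k<-1$, $v_k'=1$ if $w_k>1$, and $v_k'=w_k$ if $|w_k|\le1$. *)

(* Defs.v *)
From HB Require Import structures.
From mathcomp Require Import all_boot all_order all_algebra.
Set Implicit Arguments. Unset Strict Implicit. Unset Printing Implicit Defensive.
Import Order.TTheory GRing.Theory Num.Theory.
Local Open Scope ring_scope.

(* Opinion vectors V = (v_1,...,v_N) are functions 'I_N -> R (0-based indices). *)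

Definition Jset (R : realFieldType) (N : nat) (eps : R) (V : 'I_N -> R) (k : 'I_N)
  : {set 'I_N} := [set l : 'I_N | `|V l - V k| <= eps].

Definition Icard (R : realFieldType) (N : nat) (eps : R) (V : 'I_N -> R) (k : 'I_N)
  : nat := #|Jset eps V k|.

Definition wk (R : realFieldType) (N : nat) (h eps : R) (V : 'I_N -> R) (k : 'I_N) : R :=
  V k + h / (Icard eps V k)%:R * \sum_(l in Jset eps V k) V l.

Definition Phi (R : realFieldType) (N : nat) (h eps : R) (V : 'I_N -> R) : 'I_N -> R :=
  fun k => let w := wk h eps V k in
    if w < -1 then -1 else if 1 < w then 1 else w.

(* Main.v *)
Require Import Defs.
From HB Require Import structures.
From mathcomp Require Import all_boot all_order all_algebra.
From mathcomp Require Import lra.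
Import Order.TTheory GRing.Theory Num.Theory.
Local Open Scope ring_scope.

Lemma ex_minI (N : nat) (p : pred 'I_N) (i0 : 'I_N) : p i0 ->
  exists2 a : 'I_N, p a & forall j : 'I_N, p j -> (a <= j)%N.
Proof.
move=> H; case: (arg_minnP (fun i : 'I_N => nat_of_ord i) H) => a pa ha.
by exists a.
Qed.

Lemma ex_maxI (N : nat) (p : pred 'I_N) (i0 : 'I_N) : p i0 ->
  exists2 a : 'I_N, p a & forall j : 'I_N, p j -> (j <= a)%N.
Proof.
move=> H; case: (arg_maxnP (fun i : 'I_N => nat_of_ord i) H) => a pa ha.
by exists a.
Qed.

Lemma sum_lt (R : realFieldType) (N : nat) (f g : 'I_N -> R) (z : 'I_N) :
  (forall i, f i <= g i) -> f z < g z -> \sum_i f i < \sum_i g i.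
Proof.
move=> Hle Hlt.
rewrite (bigD1 z) //= [X in _ < X](bigD1 z) //=.
apply: ltr_leD => //; apply: ler_sum => i _; exact: Hle.
Qed.

Arguments ex_minI {N p i0}.
Arguments ex_maxI {N p i0}.
Arguments sum_lt {R N f g z}.

Definition Fs (R : realFieldType) (N : nat) (eps : R) (P : 'I_N -> R) (c : R) (i : 'I_N) : R :=
  if `|P i - c| <= eps then P i else 0.

Arguments Fs {R N}.

Lemma fixsum (R : realFieldType) (N : nat) (h eps : R) (P : 'I_N -> R) (k : 'I_N) :
  0 < h -> 0 < eps -> Phi h eps P k = P k -> -1 < P k -> P k < 1 ->
  \sum_i Fs eps P (P k) i = 0.
Proof.
move=> h0 e0 Hfix H1 H2.
move: Hfix; rewrite /Phi /wk.
set S := \sum_(l in Jset eps P k) P l.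
case: ifP => _; first by move=> E; move: H1; rewrite E ltxx.
case: ifP => _; first by move=> E; move: H2; rewrite E ltxx.
move=> /eqP; rewrite -subr_eq0 addrC addKr => /eqP Hw.
have hI : h / (Icard eps P k)%:R != 0.
  rewrite mulf_neq0 ?gt_eqF // invr_gt0 ltr0n /Icard.
  by apply/card_gt0P; exists k; rewrite inE subrr normr0 ltW.
move: Hw => /eqP; rewrite mulf_eq0 (negbTE hI) /= => /eqP S0.
rewrite -[RHS]S0 /S [RHS]big_mkcond; apply: eq_bigr => i _; by rewrite inE.
Qed.

Theorem theorem2 (R : realFieldType) (N : nat) (h eps : R) (P : 'I_N -> R) :
  (0 < N)%N ->
  0 < h -> h < 1 -> 0 < eps -> eps < 1 ->
  (forall k, -1 <= P k <= 1) ->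
  (forall i j : 'I_N, (i <= j)%N -> P i <= P j) ->
  (forall k, Phi h eps P k = P k) ->
  ~ (exists c : nat, forall k : 'I_N, P k = if (k < c)%N then -1 else 1) ->
  (forall k, P k = -1 \/ P k = 0 \/ P k = 1)
  \/
  (exists a l b m : 'I_N,
     [/\ (a <= l)%N, (l < b)%N & (b <= m)%N] /\
     (forall k : 'I_N, (k < a)%N -> P k = -1) /\
     (forall k : 'I_N, (a <= k <= l)%N -> - eps < P k /\ P k < 0) /\
     (forall k : 'I_N, (l < k)%N -> (k < b)%N -> P k = 0) /\
     (forall k : 'I_N, (b <= k <= m)%N -> 0 < P k /\ P k < eps) /\
     (forall k : 'I_N, (m < k)%N -> P k = 1) /\
     (forall k : 'I_N, (a <= k <= m)%N ->
        Jset eps P k = [set i : 'I_N | (a <= i <= m)%N]) /\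
     \sum_(i : 'I_N | (a <= i <= m)%N) P i = 0).
Proof.
move=> _ h0 h1 e0 e1 Hb Hmono Hfix _.
pose intr (i : 'I_N) := (-1 < P i) && (P i < 1).
have Hnon : forall i, ~~ intr i -> P i = -1 \/ P i = 1.
  move=> i; rewrite /intr negb_and -!leNgt; case/andP: (Hb i) => H1 H2.
  by case/orP => H; [left|right]; apply: le_anti; apply/andP; split.
have Hsum : forall k, intr k -> \sum_i Fs eps P (P k) i = 0.
  by move=> k /andP[H1 H2]; apply: (@fixsum _ _ h eps P k).
have Fk : forall k, Fs eps P (P k) k = P k.
  by move=> k; rewrite /Fs subrr normr0 ltW.
case: (boolP [forall i, intr i ==> (P i == 0)]) => [/forallP Hall | ].
  left => k; case: (boolP (intr k)) => Hk.
    by right; left; apply/eqP; exact: (implyP (Hall k) Hk).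
  by case: (Hnon k Hk) => ->; auto.
rewrite negb_forall => /existsP [i0]; rewrite negb_imply => /andP[Hi0 Pi0nz].
right.
have [a Ha Hamin] := ex_minI Hi0.
have [z Hz Hzmax] := ex_maxI Hi0.
have Hmin : forall j, intr j -> P a <= P j by move=> j Hj; apply: Hmono; apply: Hamin.
have Hmax : forall j, intr j -> P j <= P z by move=> j Hj; apply: Hmono; apply: Hzmax.
have [Ha1 Ha2] : -1 < P a /\ P a < 1 by move: Ha => /andP[].
have [Hz1 Hz2] : -1 < P z /\ P z < 1 by move: Hz => /andP[].
have pos_of_neg : forall k, intr k -> P k < 0 -> exists2 l, 0 < P l & P l <= P k + eps.
  move=> k Hk Hneg.
  case: (boolP [exists l, (0 < P l) && (`|P l - P k| <= eps)]).
    move=> /existsP[l /andP[H1]]; rewrite ler_norml => /andP[H2 H3].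
    by exists l => //; lra.
  rewrite negb_exists => /forallP Hno; exfalso.
  have := sum_lt (f := Fs eps P (P k)) (g := fun _ => 0) (z := k).
  rewrite big1_eq Hsum // ltxx Fk => HH; suff: false by []; apply: HH => // i.
  have := Hno i; rewrite /Fs; case: ifPn => // H; lra.
have neg_of_pos : forall k, intr k -> 0 < P k -> exists2 l, P l < 0 & P k - eps <= P l.
  move=> k Hk Hpos.
  case: (boolP [exists l, (P l < 0) && (`|P l - P k| <= eps)]).
    move=> /existsP[l /andP[H1]]; rewrite ler_norml => /andP[H2 H3].
    by exists l => //; lra.
  rewrite negb_exists => /forallP Hno; exfalso.
  have := sum_lt (f := fun _ => 0) (g := Fs eps P (P k)) (z := k).
  rewrite big1_eq Hsum // ltxx Fk => HH; suff: false by []; apply: HH => // i.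
  have := Hno i; rewrite /Fs; case: ifPn => // H; lra.
have [ma Mz] : P a < 0 /\ 0 < P z.
  move: Pi0nz; rewrite neq_lt => /orP[H|H].
    have [l H1 H2] := pos_of_neg i0 Hi0 H.
    have Hl : intr l by rewrite /intr; apply/andP; split; lra.
    have := Hmin i0 Hi0; have := Hmax l Hl; lra.
  have [l H1 H2] := neg_of_pos i0 Hi0 H.
  have Hl : intr l by rewrite /intr; apply/andP; split; lra.
  have := Hmin l Hl; have := Hmax i0 Hi0; lra.
have [l1 l1pos l1le] := pos_of_neg a Ha ma.
have [l2 l2neg l2ge] := neg_of_pos z Hz Mz.
have HMm : P z <= P a + eps.
  case: (lerP (P z) (P a + eps)) => // Hgt; exfalso.
  have Hpa : (fun i => P i <= P a + eps) a by rewrite /= lerDl ltW.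
  have [a' Ha' Ha'max] := ex_maxI (p := fun i => P i <= P a + eps) Hpa.
  have Hu : forall j, P j <= P a + eps -> P j <= P a'.
    by move=> j Hj; apply: Hmono; apply: Ha'max.
  have aa' := Hu a Hpa.
  have up := Hu l1 l1le.
  have Ha'i : intr a' by rewrite /intr; apply/andP; split; move: Ha' => /= ?; lra.
  have := sum_lt (f := Fs eps P (P a)) (g := Fs eps P (P a')) (z := z).
  rewrite !Hsum // ltxx => HH; suff: false by []; apply: HH.
    move=> i; rewrite /Fs.
    have Hc : P i <= P a' \/ P a + eps < P i.
      by case: (lerP (P i) (P a + eps)) => Hi; [left; exact: Hu|right].
    move: Ha' => /= Ha'.
    case: ifPn; rewrite ler_norml => H1; case: ifPn; rewrite ler_norml => H2; lra.
  move: Ha' => /= Ha'.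
  rewrite /Fs; case: ifPn; rewrite ler_norml => H1; case: ifPn; rewrite ler_norml => H2; lra.
have Hc : forall i, (P a <= P i <= P z) \/ P i = -1 \/ P i = 1.
  move=> i; case: (boolP (intr i)) => Hi.
    by left; rewrite Hmin ?Hmax.
  by right; apply: Hnon.
have Hle : forall i, Fs eps P (P a) i <= Fs eps P (P z) i.
  move=> i; rewrite /Fs; have := Hc i.
  case: ifPn; rewrite ler_norml => H1; case: ifPn; rewrite ler_norml => H2; lra.
have noneg : forall i, P i = -1 -> eps < 1 + P a.
  move=> i Hi; case: (lerP (1 + P a) eps) => // H; exfalso.
  have := sum_lt (z := i) Hle; rewrite !Hsum // ltxx => HH; suff: false by []; apply: HH.
  rewrite /Fs; case: ifPn; rewrite ler_norml => H1; case: ifPn; rewrite ler_norml => H2; lra.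
have nopos : forall i, P i = 1 -> P z + eps < 1.
  move=> i Hi; case: (lerP 1 (P z + eps)) => // H; exfalso.
  have := sum_lt (z := i) Hle; rewrite !Hsum // ltxx => HH; suff: false by []; apply: HH.
  rewrite /Fs; case: ifPn; rewrite ler_norml => H1; case: ifPn; rewrite ler_norml => H2; lra.
have Hidx : forall i, intr i = (a <= i <= z)%N.
  move=> i; apply/idP/idP.
    by move=> Hi; rewrite Hamin ?Hzmax.
  move=> /andP[H1 H2]; have := Hmono _ _ H1; have := Hmono _ _ H2.
  rewrite /intr => ? ?; apply/andP; split; lra.
have Hlt : forall i : 'I_N, (i < a)%N -> P i = -1.
  move=> i Hi; have Hn : ~~ intr i by rewrite Hidx negb_and -ltnNge Hi.
  have := Hmono _ _ (ltnW Hi); case: (Hnon i Hn) => // ->; lra.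
have Hgt : forall i : 'I_N, (z < i)%N -> P i = 1.
  move=> i Hi; have Hn : ~~ intr i by rewrite Hidx negb_and -!ltnNge Hi orbT.
  have := Hmono _ _ (ltnW Hi); case: (Hnon i Hn) => // ->; lra.
have Hpl : (fun i => P i < 0) a by [].
have [l Hl Hlmax] := ex_maxI (p := fun i => P i < 0) Hpl.
have Hpb : (fun i => 0 < P i) z by [].
have [b Hb' Hbmin] := ex_minI (p := fun i => 0 < P i) Hpb.
move: Hl Hb' => /= Hl Hb'.
exists a, l, b, z; split.
  split; first exact: Hlmax.
    rewrite ltnNge; apply/negP => H; have := Hmono _ _ H; lra.
  exact: Hbmin.
split; first exact: Hlt.
split.
  move=> k /andP[H1 H2]; have := Hmono _ _ H1; have := Hmono _ _ H2; split; lra.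
split.
  move=> k H1 H2.
  case: (ltrP (P k) 0) => Hk1.
    by have := Hlmax k Hk1; rewrite leqNgt H1.
  case: (ltrP 0 (P k)) => Hk2.
    by have := Hbmin k Hk2; rewrite leqNgt H2.
  lra.
split.
  move=> k /andP[H1 H2]; have := Hmono _ _ H1; have := Hmono _ _ H2; split; lra.
split; first exact: Hgt.
split.
  move=> k Hk; rewrite -Hidx in Hk; have := Hmin k Hk; have := Hmax k Hk => ? ?.
  apply/setP => i; rewrite !inE -Hidx.
  case: (boolP (intr i)) => Hi.
    have := Hmin i Hi; have := Hmax i Hi => ? ?.
    by rewrite ler_norml; apply/andP; split; lra.
  rewrite ler_norml; apply/negP => /andP[? ?].
  by case: (Hnon i Hi) => H; [have := noneg i H|have := nopos i H]; lra.
rewrite -[RHS](Hsum a Ha) [LHS]big_mkcond; apply: eq_bigr => i _; rewrite -Hidx /Fs.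
case: (boolP (intr i)) => Hi.
  have := Hmin i Hi; have := Hmax i Hi => ? ?.
  by rewrite ifT // ler_norml; apply/andP; split; lra.
rewrite ifF //; apply/negbTE; rewrite ler_norml; apply/negP => /andP[? ?].
by case: (Hnon i Hi) => H; [have := noneg i H|have := nopos i H]; lra.
Qed.
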